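(* Let $\mathbf A\in\mathcal S_{++}^n$, $\tau>0$, and fix $\mathbf W\in\mathbb R^{k\times n}$. Let $t\mapsto\mathbf M(t)\in\mathcal S_{++}^k$ be a continuously differentiable solution of $$\tau\tfrac{d\mathbf M}{dt}=\mathbf M^{-1}\mathbf W\mathbf A\mathbf W^\top\mathbf M^{-1}-\mathbf M.$$ Then, with $L_0(\mathbf W,\mathbf M):=\|\mathbf W\mathbf A\mathbf W^\top-\mathbf M^3\|^2$, the following identity holds: $$\tau\frac{d}{dt}L_0(\mathbf W,\mathbf M(t))=-4\big\|\mathbf M^{1/2}(\mathbf W\mathbf A\mathbf W^\top-\mathbf M^3)\mathbf M^{-1/2}\big\|^2-2L_0(\mathbf W,\mathbf M(t)),$$ where $\mathbf M=\mathbf M(t)$ on the right-hand side. In particular $\tau\frac{d}{dt}L_0\le-2L_0$, so $L_0(\mathbf W,\mathbf M(t))\le L_0(\mathbf W,\mathbf M(0))e^{-2t/\tau}$.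
   Context: Let $n>k\ge1$ be integers. $\mathcal S_{++}^m$ denotes the $m\times m$ symmetric positive definite matrices, and $\mathbf A\in\mathcal S_{++}^n$. $\|\cdot\|$ is the Frobenius norm, and $\mathbf M^{1/2}$ is the positive definite square root. *)

(* Defs.v *)
From HB Require Import structures.
From mathcomp Require Import all_boot all_order all_algebra.
From mathcomp Require Import all_classical all_reals all_analysis.
Set Implicit Arguments. Unset Strict Implicit. Unset Printing Implicit Defensive.
Import Order.TTheory GRing.Theory Num.Theory.
Import numFieldNormedType.Exports.
Local Open Scope ring_scope.

Definition posdef (R : realType) (m : nat) (M : 'M[R]_m) : Prop :=
  M^T = M /\ forall x : 'cV[R]_m, x != 0 -> 0 < (x^T *m M *m x) 0 0.

(* The positive definite square root M^{1/2}: the (unique, for M positive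
   definite) positive definite S with S * S = M; chosen by classical choice. *)
Definition sqrtm (R : realType) (m : nat) (M : 'M[R]_m) : 'M[R]_m :=
  xget 0 [set S : 'M[R]_m | posdef S /\ S *m S = M].

Definition frob2 (R : realType) (p q : nat) (M : 'M[R]_(p, q)) : R :=
  \sum_(i < p) \sum_(j < q) M i j ^+ 2.

Definition L0 (R : realType) (k n : nat) (A : 'M[R]_n) (W : 'M[R]_(k, n))
    (M : 'M[R]_k) : R :=
  frob2 (W *m A *m W^T - M *m M *m M).

(* Main.v *)
Require Import Defs.
From HB Require Import structures.
From mathcomp Require Import all_boot all_order all_algebra.
From mathcomp Require Import all_classical all_reals all_analysis.
From mathcomp Require Import complex ring lra.
Import Order.TTheory GRing.Theory Num.Theory.
Import numFieldNormedType.Exports.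
Local Open Scope ring_scope.
Local Open Scope classical_set_scope.

Set Implicit Arguments. Unset Strict Implicit. Unset Printing Implicit Defensive.

Section Sq.
Variable R : rcfType.
Local Notation C := (R[i]).
Local Notation rc := (real_complex R).
Local Notation cRe := (@complex.Re R).
Local Notation cIm := (@complex.Im R).

Lemma conjC_rc (x : R) : Num.conj (rc x) = rc x.
Proof. exact: conjc_real. Qed.

Lemma Re_sum (I : Type) (r : seq I) (P : pred I) (f : I -> C) :
  cRe (\sum_(i <- r | P i) f i) = \sum_(i <- r | P i) cRe (f i).
Proof. by apply: (big_morph _ (id1 := 0) (op1 := +%R)) => //; case=> ? ? [] ? ?. Qed.
Lemma Im_sum (I : Type) (r : seq I) (P : pred I) (f : I -> C) :
  cIm (\sum_(i <- r | P i) f i) = \sum_(i <- r | P i) cIm (f i).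
Proof. by apply: (big_morph _ (id1 := 0) (op1 := +%R)) => //; case=> ? ? [] ? ?. Qed.

Lemma qform_pos k (M : 'M[R]_k) (hs : M^T = M)
  (hp : forall x : 'cV[R]_k, x != 0 -> 0 < (x^T *m M *m x) 0 0)
  (v : 'I_k -> C) : (exists a, v a != 0) ->
  0 < \sum_b \sum_a v a * rc (M a b) * Num.conj (v b).
Proof.
move=> [a0 va0].
pose x := \col_a cRe (v a). pose y := \col_a cIm (v a).
have Q (z : 'cV[R]_k) : (z^T *m M *m z) 0 0 = \sum_b \sum_a z a 0 * M a b * z b 0.
  rewrite !mxE; apply: eq_bigr => b _; rewrite !mxE big_distrl /=.
  by apply: eq_bigr => a _; rewrite !mxE.
have ge0 (z : 'cV[R]_k) : 0 <= (z^T *m M *m z) 0 0.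
  have [->|nz] := eqVneq z 0; last exact/ltW/hp.
  by rewrite !mulmx0 mxE.
have hsym a b : M b a = M a b.
  by rewrite -[in LHS]hs mxE.
have tIm a b : cIm (v a * rc (M a b) * Num.conj (v b)) =
    cIm (v a) * M a b * cRe (v b) - cRe (v a) * M a b * cIm (v b).
  case: (v a) => p q; case: (v b) => r s /=.
  by ring.
have tRe a b : cRe (v a * rc (M a b) * Num.conj (v b)) =
    cRe (v a) * M a b * cRe (v b) + cIm (v a) * M a b * cIm (v b).
  by case: (v a) => p q; case: (v b) => r s /=; ring.
rewrite ltcE; apply/andP; split.
  rewrite /= Im_sum; under eq_bigr do rewrite Im_sum.
  under eq_bigr => ? _ do (under eq_bigr => ? _ do rewrite tIm).
  under eq_bigr do rewrite sumrB.
  rewrite sumrB subr_eq0; apply/eqP.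
  rewrite exchange_big /=; apply: eq_bigr => b _; apply: eq_bigr => a _.
  by rewrite hsym; ring.
rewrite /= Re_sum; under eq_bigr do rewrite Re_sum.
under eq_bigr => ? _ do (under eq_bigr => ? _ do rewrite tRe).
under eq_bigr do rewrite big_split.
rewrite big_split /=.
have -> : \sum_b \sum_a cRe (v a) * M a b * cRe (v b) = (x^T *m M *m x) 0 0.
  by rewrite Q; apply: eq_bigr => b _; apply: eq_bigr => a _; rewrite !mxE.
have -> : \sum_b \sum_a cIm (v a) * M a b * cIm (v b) = (y^T *m M *m y) 0 0.
  by rewrite Q; apply: eq_bigr => b _; apply: eq_bigr => a _; rewrite !mxE.
have : (x != 0) || (y != 0).
  apply: contraR va0; rewrite negb_or !negbK => /andP[/eqP x0 /eqP y0].
  have := congr1 (fun z : 'cV[R]_k => z a0 0) x0; have := congr1 (fun z : 'cV[R]_k => z a0 0) y0.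
  rewrite !mxE; case: (v a0) => p q /= -> -> //.
case/orP => nz.
  by have := hp _ nz; have := ge0 y; lra.
by have := hp _ nz; have := ge0 x; lra.
Qed.

Lemma diag_comm n (X : 'M[C]_n) (a b : 'rV[C]_n) :
  (forall i j, a 0 i = a 0 j -> b 0 i = b 0 j) ->
  X *m diag_mx a = diag_mx a *m X -> X *m diag_mx b = diag_mx b *m X.
Proof.
move=> hab hX; rewrite mul_mx_diag mul_diag_mx; apply/matrixP => i j; rewrite !mxE.
have := congr1 (fun Y : 'M[C]_n => Y i j) hX; rewrite mul_mx_diag mul_diag_mx !mxE.
have [->|nz] := eqVneq (X i j) 0; first by rewrite !(mulr0, mul0r).
move=> h; rewrite (hab i j); first by rewrite mulrC.
by apply: (mulfI nz); rewrite h mulrC.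
Qed.

Lemma conj_real (z : C) : Num.conj z = z -> rc (cRe z) = z.
Proof.
case: z => a b /= [] h; apply/eqP; rewrite eq_complex /= eqxx /=.
apply/eqP; lra.
Qed.

Local Open Scope sesquilinear_scope.

Lemma sqrt_exists k (M : 'M[R]_k) (hs : M^T = M)
  (hp : forall x : 'cV[R]_k, x != 0 -> 0 < (x^T *m M *m x) 0 0) :
  exists S : 'M[R]_k, (S^T = S /\ forall x : 'cV[R]_k, x != 0 -> 0 < (x^T *m S *m x) 0 0)
     /\ S *m S = M.
Proof.
pose Mc := M ^ rc.
have McH : Mc \is hermsymmx.
  apply/is_hermitianmxP; rewrite expr0 scale1r; apply/matrixP => i j; rewrite !mxE.
  by rewrite conjC_rc -[in LHS]hs mxE.
pose P := spectralmx Mc; pose d := spectral_diag Mc.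
have Pu : P \is unitarymx := spectral_unitarymx Mc.
have hMc : Mc = P^t* *m diag_mx d *m P.
  by rewrite -invmx_unitary //; exact/orthomx_spectralP/hermitian_normalmx.
have PP : P *m P^t* = 1%:M by exact/unitarymxP.
have PP' : P^t* *m P = 1%:M by rewrite -invmx_unitary // mulVmx // unitarymx_unit.
have dR : d \is a realmx := hermitian_spectral_diag_real McH.
have dRe j : rc (cRe (d 0 j)) = d 0 j by apply: RRe_real; exact: (mxOverP dR).
have D : P *m Mc *m P^t* = diag_mx d.
  by rewrite hMc !mulmxA PP mul1mx -mulmxA PP mulmx1.
have dpos j : 0 < cRe (d 0 j).
  have hq := @qform_pos k M hs hp (fun a => P j a).
  have nz : exists a, P j a != 0.
    apply/existsP; apply: contraT; rewrite negb_exists => /forallP h0.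
    have := congr1 (fun Y : 'M[C]_k => Y j j) PP; rewrite !mxE eqxx /= big1.
      by move/eqP; rewrite eq_sym oner_eq0.
    by move=> a _; rewrite !mxE (eqP (negPn (h0 a))) mul0r.
  move: (hq nz).
  have -> : \sum_b \sum_a P j a * rc (M a b) * Num.conj (P j b) = d 0 j.
    have := congr1 (fun Y : 'M[C]_k => Y j j) D; rewrite !mxE eqxx mulr1n => <-.
    apply: eq_bigr => b _; rewrite !mxE big_distrl /=; apply: eq_bigr => a _.
    by rewrite !mxE.
  by rewrite -dRe -(rmorph0 rc) ltcR.
pose e := \row_j rc (Num.sqrt (cRe (d 0 j))).
have ee : diag_mx e *m diag_mx e = diag_mx d.
  rewrite mul_diag_mx; apply/matrixP => i j; rewrite !mxE mulrnAr; congr (_ *+ _).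
  rewrite -rmorphM -expr2 sqr_sqrtr; [exact: dRe | exact: ltW (dpos i)].
pose E := diag_mx e.
pose Sc := P^t* *m E *m P.
have ScSc : Sc *m Sc = Mc.
  rewrite /Sc -!mulmxA (mulmxA P) PP mul1mx !mulmxA -(mulmxA (P^t*)) ee.
  by rewrite hMc.
pose Pc := P ^ Num.conj.
have cPt : (P^t*) ^ Num.conj = P^T.
  by rewrite -map_mx_comp (map_mx_id (@conjCK _)).
have cMc : Mc ^ Num.conj = Mc.
  by apply/matrixP => i j; rewrite !mxE conjC_rc.
have cD : diag_mx d ^ Num.conj = diag_mx d.
  rewrite map_diag_mx; congr diag_mx; apply/matrixP => i j.
  rewrite !mxE; apply: conj_Creal; rewrite (ord1 i); exact: (mxOverP dR).
have cE : E ^ Num.conj = E.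
  rewrite map_diag_mx; congr diag_mx; apply/matrixP => i j.
  rewrite !mxE; exact: conjC_rc.
have hMc2 : Mc = P^T *m diag_mx d *m Pc.
  by rewrite -{1}cMc hMc !map_mxM cPt cD.
have PP2 : Pc *m P^T = 1%:M.
  by rewrite -cPt -map_mxM PP map_mx1.
have PP2' : P^T *m Pc = 1%:M.
  by rewrite -cPt -map_mxM PP' map_mx1.
pose X := P *m P^T.
have XD : X *m diag_mx d = diag_mx d *m X.
  rewrite /X -[X in X = _]mulmx1 -PP2 !mulmxA -(mulmxA P) -(mulmxA P) -hMc2.
  by rewrite hMc !mulmxA PP mul1mx.
have XE : X *m E = E *m X.
  apply: diag_comm XD => i j; rewrite !mxE => ->. by [].
have ScE : Sc = P^T *m E *m Pc.
  have -> : Sc = P^t* *m (E *m X) *m Pc.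
    by rewrite /Sc /X !mulmxA -(mulmxA _ (P^T)) PP2' mulmx1.
  by rewrite -XE /X !mulmxA PP' mul1mx.
have cSc : Sc ^ Num.conj = Sc.
  by rewrite {1}ScE !map_mxM cE -map_mx_comp (map_mx_id (@conjCK _)).
have tSc : Sc^T = Sc.
  by rewrite {1}ScE !trmx_mul trmxK tr_diag_mx /Pc map_trmx mulmxA.
pose S := Sc ^ cRe.
have ScS : S ^ rc = Sc.
  apply/matrixP => i j; rewrite !mxE; apply: conj_real.
  by have := congr1 (fun Y : 'M[C]_k => Y i j) cSc; rewrite !mxE.
exists S; split; first split.
- by apply: (map_mx_inj (f := real_complex R)); rewrite -map_trmx ScS tSc.
- move=> x xnz.
  pose xc := x ^ rc.
  have hv : rc ((x^T *m S *m x) 0 0) = (xc^T *m Sc *m xc) 0 0.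
    have -> : rc ((x^T *m S *m x) 0 0) = ((x^T *m S *m x) ^ rc) 0 0 by rewrite [RHS]mxE.
    by rewrite !map_mxM -map_trmx ScS.
  pose w := P *m xc.
  have hw : xc^T *m P^t* = w^t*.
    rewrite /w trmx_mul map_mxM; congr (_ *m _).
    apply/matrixP => i j; rewrite !mxE; exact: (esym (conjC_rc _)).
  have wnz : w != 0.
    apply: contra xnz => /eqP w0; apply/eqP.
    apply: (map_mx_inj (f := real_complex R)); rewrite map_mx0.
    by rewrite -/xc -(mulKmx (unitarymx_unit Pu) xc) -/w w0 mulmx0.
  have [j0 wj0] : exists j, w j 0 != 0.
    apply/existsP; apply: contraR wnz; rewrite negb_exists => /forallP h.
    apply/eqP/matrixP => i j; rewrite (ord1 j) [RHS]mxE; apply/eqP; move: (h i); by rewrite negbK.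
  have hval : (xc^T *m Sc *m xc) 0 0 = \sum_j e 0 j * (w j 0 * Num.conj (w j 0)).
    rewrite /Sc !mulmxA hw -(mulmxA _ P) -/w mxE; apply: eq_bigr => j _.
    by rewrite mul_mx_diag !mxE; ring.
  have tpos j : 0 <= e 0 j * (w j 0 * Num.conj (w j 0)).
    by rewrite mulr_ge0 // ?mulcJ_ge0 // mxE -(rmorph0 rc) lecR sqrtr_ge0.
  move: hv; rewrite hval (bigD1 j0) //= => hv.
  have : rc 0 < rc ((x^T *m S *m x) 0 0).
    rewrite hv rmorph0; apply: ltr_pwDl; last exact: sumr_ge0.
    by rewrite mulr_gt0 // ?mul_conjC_gt0 // mxE -(rmorph0 rc) ltcR sqrtr_gt0.
  by rewrite ltcR.
by apply: (map_mx_inj (f := real_complex R)); rewrite map_mxM ScS ScSc.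
Qed.

End Sq.

Section Calc.
Variable R : realType.

Lemma is_derive_entry p q (f : R -> 'M[R]_(p,q)) (t : R) (df : 'M[R]_(p,q)) (i : 'I_p) (j : 'I_q) :
  is_derive t 1 f df -> is_derive t 1 (fun s => f s i j) (df i j).
Proof.
move=> [hd hv]; have hd' := (derivable_mxP f t 1).1 hd i j.
by apply: DeriveDef => //; rewrite -hv derive_mx // mxE.
Qed.

Lemma is_derive_mx p q (f : R -> 'M[R]_(p,q)) (t : R) (D : 'M[R]_(p,q)) :
  (forall i j, is_derive t 1 (fun s => f s i j) (D i j)) -> is_derive t 1 f D.
Proof.
move=> h; have hd : derivable f t 1.
  by apply/derivable_mxP => i j; have [] := h i j.
apply: DeriveDef => //; rewrite derive_mx //; apply/matrixP => i j; rewrite mxE.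
by have [_ ->] := h i j.
Qed.

Lemma is_derive_sum' n (h : 'I_n -> R -> R) (t : R) (dh : 'I_n -> R) :
  (forall i, is_derive t 1 (h i) (dh i)) ->
  is_derive t 1 (fun s => \sum_(i < n) h i s) (\sum_(i < n) dh i).
Proof.
move=> H; have -> : (fun s => \sum_(i < n) h i s) = \sum_(i < n) h i by rewrite fct_sumE.
exact: is_derive_sum.
Qed.

Lemma is_deriveM' (f g : R -> R) (t df dg : R) :
  is_derive t 1 f df -> is_derive t 1 g dg ->
  is_derive t 1 (fun s => f s * g s) (df * g t + f t * dg).
Proof.
move=> hf hg.
have h : is_derive t 1 (fun s => f s * g s) (f t *: dg + g t *: df) := is_deriveM hf hg.
have -> : df * g t + f t * dg = f t *: dg + g t *: df.
  by rewrite addrC; congr (_ + _); rewrite mulrC.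
exact: h.
Qed.

Lemma is_derive_mulmx p q r (f : R -> 'M[R]_(p,q)) (g : R -> 'M[R]_(q,r)) (t : R) df dg :
  is_derive t 1 f df -> is_derive t 1 g dg ->
  is_derive t 1 (fun s => f s *m g s) (df *m g t + f t *m dg).
Proof.
move=> hf hg; apply: is_derive_mx => i j.
have -> : (fun s => (f s *m g s) i j) = (fun s => \sum_(l < q) f s i l * g s l j).
  by apply/funext => s; rewrite mxE.
apply: is_derive_eq.
  by apply: is_derive_sum' => l; apply: is_deriveM';
    [exact: is_derive_entry hf | exact: is_derive_entry hg].
by rewrite !mxE -big_split.
Qed.

Lemma is_derive_frob2 p q (F : R -> 'M[R]_(p,q)) (t : R) (G : 'M[R]_(p,q)) :
  is_derive t 1 F G ->
  is_derive t 1 (fun s => frob2 (F s)) (\sum_i \sum_j 2 * F t i j * G i j).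
Proof.
move=> hF; rewrite /frob2.
apply: is_derive_sum' => i; apply: is_derive_sum' => j.
have h : is_derive t 1 (fun s => F s i j ^+ 2) ((2%:R * F t i j ^+ 1) *: G i j)
  := is_deriveX 2 (is_derive_entry i j hF).
have -> : 2 * F t i j * G i j = (2%:R * F t i j ^+ 1) *: G i j by rewrite expr1.
exact: h.
Qed.

Lemma is_derive_subl p q (B : 'M[R]_(p,q)) (X : R -> 'M[R]_(p,q)) (t : R) dX :
  is_derive t 1 X dX -> is_derive t 1 (fun s => B - X s) (- dX).
Proof.
move=> h.
have h' : is_derive t 1 (fun s => B - X s) (0 - dX) := is_deriveB (is_derive_cst B t 1) h.
by rewrite sub0r in h'.
Qed.

Lemma is_derive_expMl (c t : R) :
  is_derive t 1 (fun s => expR (c * s)) (expR (c * t) * c).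
Proof.
have hg : is_derive t 1 (fun s : R => c * s) c.
  have h := is_deriveM' (is_derive_cst c t 1) (is_derive_id t 1).
  by rewrite mul0r add0r mulr1 in h.
have he : is_derive (c * t) 1 expR (expR (c * t)) := is_derive_expR _.
exact: (is_derive1_comp he hg).
Qed.

End Calc.

Section Alg.
Variable R : realType.

Lemma posdef_unit k (M : 'M[R]_k) : posdef M -> M \in unitmx.
Proof.
case=> hs hp; rewrite -row_free_unit -kermx_eq0; apply: contraT => nz.
have [i ni] : exists i, row i (kermx M) != 0.
  apply/existsP; apply: contraR nz; rewrite negb_exists => /forallP h.
  apply/eqP/row_matrixP => i; rewrite row0; apply/eqP; move: (h i); by rewrite negbK.
have := hp (row i (kermx M))^T; rewrite trmx_eq0 => /(_ ni).
by rewrite trmxK -row_mul mulmx_ker row0 mul0mx mxE ltxx.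
Qed.

Lemma sqrtm_spec k (M : 'M[R]_k) : posdef M ->
  posdef (sqrtm M) /\ sqrtm M *m sqrtm M = M.
Proof.
case=> hs hp; rewrite /sqrtm.
set P := [set S : 'M[R]_k | posdef S /\ S *m S = M].
have : P (xget 0 P).
  apply: xgetPex.
  by have [S [[h1 h2] h3]] := sqrt_exists hs hp; exists S.
by [].
Qed.

Lemma ip_tr p q (X Y : 'M[R]_(p,q)) :
  \sum_i \sum_j X i j * Y i j = \tr (X *m Y^T).
Proof.
rewrite /mxtrace; apply: eq_bigr => i _; rewrite !mxE; apply: eq_bigr => j _.
by rewrite !mxE.
Qed.

Lemma frob2_tr p q (X : 'M[R]_(p,q)) : frob2 X = \tr (X *m X^T).
Proof. by rewrite -ip_tr /frob2; apply: eq_bigr => i _; apply: eq_bigr => j _; rewrite expr2. Qed.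

Lemma key_alg k (B M D : 'M[R]_k) (tau : R) : posdef M -> B^T = B ->
  tau *: D = invmx M *m B *m invmx M - M ->
  tau * (\sum_i \sum_j 2 * (B - M *m M *m M) i j *
     (- (D *m M *m M + M *m D *m M + M *m M *m D)) i j)
  = - 4 * frob2 (sqrtm M *m (B - M *m M *m M) *m invmx (sqrtm M))
    - 2 * frob2 (B - M *m M *m M).
Proof.
move=> pM hB hD.
have uM := posdef_unit pM.
have [pS SS] := sqrtm_spec pM.
have uS := posdef_unit pS.
have hM : M^T = M by case: pM.
have hS : (sqrtm M)^T = sqrtm M by case: pS.
set S := sqrtm M in SS hS uS *.
set E := B - M *m M *m M.
set iM := invmx M.
have hE : E^T = E by rewrite /E linearB /= hB !trmx_mul hM mulmxA.
have hiM : iM^T = iM by rewrite /iM trmx_inv hM.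
have iMM : iM *m M = 1%:M by rewrite mulVmx.
have MiM : M *m iM = 1%:M by rewrite mulmxV.
have hD' : tau *: D = iM *m E *m iM.
  rewrite hD /E mulmxBr mulmxBl; congr (_ - _).
  by rewrite !mulmxA iMM mul1mx -!mulmxA MiM mulmx1.
clearbody E.
have t1 : tau *: (D *m M *m M) = iM *m E *m M.
  by rewrite !scalemxAl hD' -(mulmxA _ iM) iMM mulmx1.
have t2 : tau *: (M *m D *m M) = E.
  by rewrite scalemxAl scalemxAr hD' !mulmxA MiM mul1mx -mulmxA iMM mulmx1.
have t3 : tau *: (M *m M *m D) = M *m E *m iM.
  by rewrite scalemxAr hD' !mulmxA -(mulmxA M M iM) MiM mulmx1.
set G := - _.
have tG : tau *: G = - (iM *m E *m M + E + M *m E *m iM).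
  by rewrite /G scalerN !scalerDr t1 t2 t3.
have L1 : tau * (\sum_i \sum_j 2 * E i j * G i j) = 2 * \tr (E *m (tau *: G)^T).
  rewrite -ip_tr mulr_sumr mulr_sumr; apply: eq_bigr => i _.
  rewrite mulr_sumr mulr_sumr; apply: eq_bigr => j _; rewrite [(tau *: G) i j]mxE; ring.
rewrite L1 tG.
have tT : (- (iM *m E *m M + E + M *m E *m iM))^T = - (M *m E *m iM + E + iM *m E *m M).
  by rewrite raddfN !raddfD /= !trmx_mul hE hiM hM !mulmxA.
rewrite tT mulmxN !mulmxDr raddfN !raddfD /=.
have RS : frob2 (S *m E *m invmx S) = \tr (E *m iM *m E *m M).
  have iSS : invmx S *m invmx S = iM.
    have u2 : S *m S \in unitmx by rewrite unitmx_mul uS.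
    have h1 : (S *m S) *m (invmx S *m invmx S) = 1%:M.
      by rewrite mulmxA mulmxK // mulmxV.
    by rewrite /iM -SS -[RHS]mulmx1 -h1 mulmxA mulVmx // mul1mx.
  rewrite frob2_tr !trmx_mul trmx_inv hS hE !mulmxA mxtrace_mulC !mulmxA SS.
  rewrite -(mulmxA (M *m E) (invmx S) (invmx S)) iSS -!mulmxA mxtrace_mulC.
  by rewrite !mulmxA.
rewrite RS frob2_tr hE.
have T1 : \tr (E *m (M *m E *m iM)) = \tr (E *m iM *m E *m M).
  by rewrite !mulmxA -(mulmxA (E *m M)) mxtrace_mulC !mulmxA.
have T2 : \tr (E *m (iM *m E *m M)) = \tr (E *m iM *m E *m M) by rewrite !mulmxA.
rewrite T1 T2; ring.
Qed.

End Alg.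

Section Cont.
Variables (R : realType) (T : topologicalType).

Lemma cont_sum n (h : 'I_n -> T -> R) (x : T) :
  (forall i, h i @ x --> h i x) ->
  (fun s => \sum_(i < n) h i s) @ x --> \sum_(i < n) h i x.
Proof.
elim: n h => [|n IH] h H.
  have -> : (fun s => \sum_(i < 0) h i s) = cst 0 by apply/funext => s; rewrite big_ord0.
  rewrite big_ord0; exact: cvg_cst.
have -> : (fun s => \sum_(i < n.+1) h i s) =
   (fun s => \sum_(i < n) h (widen_ord (leqnSn n) i) s + h ord_max s).
  by apply/funext => s; rewrite big_ord_recr.
rewrite big_ord_recr; apply: cvgD; last exact: H.
exact: (IH (fun i => h (widen_ord (leqnSn n) i))).
Qed.

Definition ecu p q (F : T -> 'M[R]_(p,q)) x :=
  forall i j, (fun s => F s i j) @ x --> F x i j.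

Lemma ecu_mul p q r (f : T -> 'M[R]_(p,q)) (g : T -> 'M[R]_(q,r)) x :
  ecu f x -> ecu g x -> ecu (fun s => f s *m g s) x.
Proof.
move=> hf hg i j.
have -> : (fun s => (f s *m g s) i j) = (fun s => \sum_l f s i l * g s l j).
  by apply/funext => s; rewrite mxE.
rewrite mxE; apply: cont_sum => l; exact: cvgM.
Qed.

Lemma ecu_subl p q (B : 'M[R]_(p,q)) (f : T -> 'M[R]_(p,q)) x :
  ecu f x -> ecu (fun s => B - f s) x.
Proof.
move=> hf i j.
have -> : (fun s => (B - f s) i j) = (fun s => B i j - f s i j).
  by apply/funext => s; rewrite !mxE.
rewrite !mxE; apply: cvgB => //; exact: cvg_cst.
Qed.

Lemma cont_frob2 p q (F : T -> 'M[R]_(p,q)) x :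
  ecu F x -> (fun s => frob2 (F s)) @ x --> frob2 (F x).
Proof.
move=> hF; rewrite /frob2; apply: cont_sum => i; apply: cont_sum => j.
have -> : (fun s => F s i j ^+ 2) = (fun s => F s i j * F s i j).
  by apply/funext => s; rewrite expr2.
rewrite expr2; exact: cvgM.
Qed.

End Cont.

Unset Implicit Arguments.

Lemma frob2_ge0 (R : realType) p q (X : 'M[R]_(p,q)) : 0 <= frob2 X.
Proof. by apply: sumr_ge0 => i _; apply: sumr_ge0 => j _; exact: sqr_ge0. Qed.

Theorem mainTheorem10 (R : realType) (n k : nat) (hk : (1 <= k)%N) (hkn : (k < n)%N)
  (A : 'M[R]_n) (hA : posdef A) (tau : R) (htau : 0 < tau) (W : 'M[R]_(k, n))
  (M : R -> 'M[R]_k)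
  (hMpd : forall t, 0 <= t -> posdef (M t))
  (hMcont : {within `[0, +oo[, continuous M})
  (hMder : forall t : R, 0 < t -> derivable M t 1)
  (hMC1 : {in `]0, +oo[, continuous (derive1 M)})
  (hODE : forall t : R, 0 < t ->
     tau *: (derive1 M t) = invmx (M t) *m (W *m A *m W^T) *m invmx (M t) - M t) :
  (forall t : R, 0 < t ->
     derivable (fun s => L0 A W (M s)) t 1 /\
     tau * derive1 (fun s => L0 A W (M s)) t =
       - 4 * frob2 (sqrtm (M t) *m (W *m A *m W^T - M t *m M t *m M t)
                      *m invmx (sqrtm (M t)))
       - 2 * L0 A W (M t)) /\
  (forall t : R, 0 < t -> tau * derive1 (fun s => L0 A W (M s)) t <= - 2 * L0 A W (M t)) /\
  (forall t, 0 <= t -> L0 A W (M t) <= L0 A W (M 0) * expR (- (2 * t) / tau)).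
Proof.
have hB : (W *m A *m W^T)^T = W *m A *m W^T.
  by rewrite !trmx_mul trmxK (proj1 hA) mulmxA.
set B := W *m A *m W^T in hB hODE *.
pose Lf := fun s => L0 A W (M s).
have hLder : forall t : R, 0 < t -> is_derive t 1 Lf
   (\sum_i \sum_j 2 * (B - M t *m M t *m M t) i j *
      (- (derive1 M t *m M t *m M t + M t *m derive1 M t *m M t
          + M t *m M t *m derive1 M t)) i j).
  move=> t t0.
  have hM : is_derive t 1 M (derive1 M t).
    by rewrite derive1E; exact: derivableP (hMder t t0).
  have h2 := is_derive_mulmx hM hM.
  have h3 := is_derive_mulmx h2 hM.
  have h4 := is_derive_subl B h3.
  have h5 := is_derive_frob2 h4.
  by rewrite mulmxDl in h5.
have P1 : forall t : R, 0 < t ->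
     derivable Lf t 1 /\
     tau * derive1 Lf t =
       - 4 * frob2 (sqrtm (M t) *m (B - M t *m M t *m M t) *m invmx (sqrtm (M t)))
       - 2 * L0 A W (M t).
  move=> t t0; have [hd hv] := hLder t t0; split => //.
  rewrite derive1E hv; exact: key_alg (hMpd t (ltW t0)) hB (hODE t t0).
have P2 : forall t : R, 0 < t -> tau * derive1 Lf t <= - 2 * L0 A W (M t).
  move=> t t0; have [_ ->] := P1 t t0.
  by have := @frob2_ge0 _ _ _ (sqrtm (M t) *m (B - M t *m M t *m M t) *m invmx (sqrtm (M t))); lra.
split => //; split => //.
move=> t t0.
pose c := 2 / tau.
pose e := fun s : R => expR (c * s).
pose h := fun s : R => Lf s * e s.
have hder : forall s : R, 0 < s ->
    is_derive s 1 h (derive1 Lf s * e s + Lf s * (expR (c * s) * c)).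
  move=> s s0; have [hd hv] := hLder s s0.
  have hL : is_derive s 1 Lf (derive1 Lf s) by rewrite derive1E; exact: derivableP.
  exact: (is_deriveM' hL (is_derive_expMl c s)).
have hneg : forall x : R, x \in `]0, +oo[%R -> h^`() x <= 0.
  move=> x; rewrite in_itv /= andbT => x0.
  rewrite derive1E; have [_ ->] := hder x x0.
  have := P2 x x0.
  have ex : 0 < e x by exact: expR_gt0.
  rewrite /e -/(e x).
  have -> : derive1 Lf x * e x + Lf x * (e x * c) =
      e x * ((tau * derive1 Lf x + 2 * Lf x) / tau).
    by rewrite /c; field; rewrite gt_eqF.
  move=> hP; rewrite pmulr_rle0 // pmulr_lle0 ?invr_gt0 //.
  rewrite /Lf in hP *; lra.
have hdv : forall x : R, x \in `]0, +oo[%R -> derivable h x 1.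
  by move=> x; rewrite in_itv /= andbT => x0; have [] := hder x x0.
have econt : continuous e.
  move=> x; apply: differentiable_continuous; apply/derivable1_diffP.
  by have [] := is_derive_expMl c x.
have hcont : {within `[0, +oo[, continuous h}.
  move=> x.
  have hMe : ecu (M : subspace `[0, +oo[ -> 'M[R]_k) x.
    move=> i j; exact: (continuous_comp (hMcont x) (@coord_continuous R k k i j (M x))).
  have hL : (fun s : subspace `[0, +oo[ => Lf s) @ x --> Lf x :=
    cont_frob2 (ecu_subl (B := B) (ecu_mul (ecu_mul hMe hMe) hMe)).
  have hE : (e : subspace `[0, +oo[ -> R) @ x --> e x.
    have := @continuous_subspaceT R R `[0, +oo[ e econt x; exact.
  exact: (cvgM hL hE).
have := ler0_derive1_nincry hdv hneg hcont (lexx 0) t0.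
rewrite /h /e mulr0 expR0 mulr1 => hle.
have -> : - (2 * t) / tau = - (c * t) by rewrite /c; field; rewrite gt_eqF.
rewrite expRN -/(e t); have ex : 0 < e t by exact: expR_gt0.
by rewrite ler_pdivlMr.
Qed.
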